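(* Let $(\pi_r)_{r\in\mathbb{N}}$ be periods and let $(K_t)_{t\in\mathbb{N}}$ be the multiperiodic process with periods $(\pi_r)$. Then $(K_t)$ is finite (i.e. $K_t<\infty$ for all $t\in\mathbb{N}$ almost surely) if and only if $$\sum_{r=1}^\infty\frac{1}{\pi_r}=\infty\quad\text{or}\quad \pi_s=1\text{ for some } s\in\mathbb{N}.$$
   Context: $\mathbb{N}=\{1,2,3,\dots\}$. Multiperiodic sequence with periods $\pi_r\in\mathbb{N}$ and seeds $\sigma_r\in\{1,\dots,\pi_r\}$: the sequence $(k_t)_{t\in\mathbb{N}}$ with values in $\mathbb{N}\cup\{\infty\}$ such that for each $r$, the subsequence obtained from $(k_t)$ by deleting all tokens $k_t<r$, denoted $(k^{(r)}_t)_{t\in\mathbb{N}}$, satisfies $k^{(r)}_t=r\iff t\equiv\sigma_r\pmod{\pi_r}$; entries left undefined for all $r$ are set to $\infty$. Equivalently: clocks $\phi_r$ start at $\sigma_r$; for each token, scan $r=1,2,\dots$, decrementing each clock with $\phi_r>1$, until the first $r$ with $\phi_r=1$, output that $r$ and reset $\phi_r=\pi_r$ (output $\infty$ if no such $r$ exists). The multiperiodic process with periods $(\pi_r)$ is the random multiperiodic sequence with these periods and independent random seeds $\Sigma_r$ with $P(\Sigma_r=i)=1/\pi_r$ for $i\in\{1,\dots,\pi_r\}$. *)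

(* Defs.v *)
From HB Require Import structures.
From mathcomp Require Import all_boot all_order all_algebra.
From mathcomp Require Import all_classical all_reals all_analysis.
Set Implicit Arguments. Unset Strict Implicit. Unset Printing Implicit Defensive.
Import Order.TTheory GRing.Theory Num.Theory.
Local Open Scope classical_set_scope.
Local Open Scope ring_scope.

(* Indexing convention: Rocq level r : nat corresponds to the paper's level
   r+1, and Rocq time t : nat to the paper's time t+1.  The value infinity
   of a token is represented by None, a finite level r by Some r. *)

Lemma ex_clock1 (phi : nat -> nat) :
  (exists r, phi r = 1%N) -> exists r, phi r == 1%N.
Proof. by case=> r h; exists r; apply/eqP. Qed.

Definition first1 (phi : nat -> nat) : option nat :=
  match pselect (exists r, phi r = 1%N) with
  | left h => Some (ex_minn (ex_clock1 h))
  | right _ => None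
  end.

Definition clock_step (pi : nat -> nat) (phi : nat -> nat) : nat -> nat :=
  fun r =>
    match first1 phi with
    | Some k =>
        if (r < k)%N then (if (1 < phi r)%N then (phi r - 1)%N else phi r)
        else if r == k then pi r else phi r
    | None => if (1 < phi r)%N then (phi r - 1)%N else phi r
    end.

Fixpoint clocks (pi sigma : nat -> nat) (t : nat) : nat -> nat :=
  match t with
  | 0 => sigma
  | t'.+1 => clock_step pi (clocks pi sigma t')
  end.

Definition mp_seq (pi sigma : nat -> nat) (t : nat) : option nat :=
  first1 (clocks pi sigma t).

Definition indep_seeds d (T : measurableType d) (R : realType)
  (P : probability T R) (S : nat -> T -> nat) : Prop :=
  forall (s : seq nat) (v : nat -> nat), uniq s ->
    P [set w | forall r, r \in s -> S r w = v r] =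
    (\prod_(r <- s) P [set w | S r w = v r])%E.

(* Main.v *)
Require Import Defs.
From HB Require Import structures.
From mathcomp Require Import all_boot all_order all_algebra.
From mathcomp Require Import all_classical all_reals all_analysis.
From mathcomp Require Import zify ring lra.
From Stdlib Require Import Lia.
Import Order.TTheory GRing.Theory Num.Theory.
Local Open Scope classical_set_scope.
Local Open Scope ring_scope.
Set Implicit Arguments. Unset Strict Implicit. Unset Printing Implicit Defensive.

Section Comb.
Local Open Scope nat_scope.
Variable pi : nat -> nat.

Lemma first1_None phi : first1 phi = None -> forall r, phi r <> 1.
Proof.
rewrite /first1; case: pselect => // h _ r hr; apply: h; by exists r.
Qed.

Lemma first1_NoneI phi : (forall r, phi r <> 1) -> first1 phi = None.
Proof.
rewrite /first1; case: pselect => // -[r hr] h; by case: (h r).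
Qed.

Lemma first1_Some phi k : first1 phi = Some k ->
  phi k = 1 /\ forall j, j < k -> phi j <> 1.
Proof.
rewrite /first1; case: pselect => // h [<-].
case: ex_minnP => m /eqP hm hmin; split => // j hj hj1.
have := hmin j (introT eqP hj1); rewrite leqNgt hj //.
Qed.

Lemma clock_stepE phi r : clock_step pi phi r =
  if has (fun j => phi j == 1) (iota 0 r) then phi r
  else if phi r == 1 then pi r
  else if 1 < phi r then phi r - 1 else phi r.
Proof.
rewrite /clock_step; case E: (first1 phi) => [k|].
- have [h1 h2] := first1_Some E.
  case: (ltnP r k) => hrk.
  + have -> : has (fun j => phi j == 1) (iota 0 r) = false.
      apply/negbTE/hasPn => j; rewrite mem_iota => /andP[_ hj].
      apply/eqP; apply: h2; exact: leq_trans hj (ltnW hrk).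
    by have /eqP/negbTE -> := h2 r hrk.
  + case: eqVneq => [->|hne].
    * have -> : has (fun j => phi j == 1) (iota 0 k) = false.
        apply/negbTE/hasPn => j; rewrite mem_iota => /andP[_ hj].
        by apply/eqP; apply: h2.
      by rewrite h1 eqxx.
    * have -> : has (fun j => phi j == 1) (iota 0 r) = true.
        apply/hasP; exists k; last by rewrite h1.
        rewrite mem_iota /=; rewrite ltn_neqAle hrk andbT.
        by rewrite eq_sym.
      by [].
- have h := first1_None E.
  have -> : has (fun j => phi j == 1) (iota 0 r) = false.
    by apply/negbTE/hasPn => j _; apply/eqP; apply: h.
  by have /eqP/negbTE -> := h r.
Qed.

Lemma clocks_agree sigma sigma' n : (forall j, j < n -> sigma j = sigma' j) ->
  forall t j, j < n -> clocks pi sigma t j = clocks pi sigma' t j.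
Proof.
move=> hs; elim=> [|t IH] j hj /=; first exact: hs.
rewrite !clock_stepE.
have -> : has (fun j0 => clocks pi sigma t j0 == 1) (iota 0 j) =
          has (fun j0 => clocks pi sigma' t j0 == 1) (iota 0 j).
  apply: eq_in_has => i; rewrite mem_iota => /andP[_ hi] /=.
  by rewrite IH // (leq_trans hi (ltnW hj)).
by rewrite IH.
Qed.

Definition free n (phi : nat -> nat) := ~~ has (fun j => phi j == 1) (iota 0 n).
Definition mcount sigma n t := count (fun s => free n (clocks pi sigma s)) (iota 0 t).

Lemma mcount_agree sigma sigma' n : (forall j, j < n -> sigma j = sigma' j) ->
  forall t, mcount sigma n t = mcount sigma' n t.
Proof.
move=> hs t; apply: eq_count => s; rewrite /free; congr negb.
apply: eq_in_has => i; rewrite mem_iota => /andP[_ hi] /=.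
by rewrite (clocks_agree hs).
Qed.

Lemma clock_inv sigma n : 0 < pi n -> 1 <= sigma n <= pi n ->
  forall t, 1 <= clocks pi sigma t n <= pi n /\
    (clocks pi sigma t n + mcount sigma n t) %% pi n = sigma n %% pi n.
Proof.
move=> hp hs; elim=> [|t [IH1 IH2]]; first by rewrite /mcount /= addn0.
rewrite /mcount (_ : iota 0 t.+1 = iota 0 t ++ [:: t]); last by rewrite -addn1 iotaD.
rewrite count_cat -/(mcount sigma n t).
rewrite /= clock_stepE; rewrite /free in IH2 *.
case: has => /=.
  by rewrite addn0 !addn0 in IH2 *.
rewrite addn1.
case: eqVneq => [h1|h1].
  split; first by rewrite hp leqnn.
  by rewrite -IH2 h1 modnDl add1n.
have h2 : 1 < clocks pi sigma t n.
  by move: IH1 h1; case: (clocks pi sigma t n) => [|[|k]].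
rewrite h2; split; first by move: IH1 h2; lia.
rewrite -IH2; congr (_ %% _); move: h2; lia.
Qed.

Lemma key_x0 sigma sigma' n t : 0 < pi n ->
  (forall j, j < n -> sigma' j = sigma j) ->
  sigma' n = (mcount sigma n t) %% pi n + 1 ->
  clocks pi sigma' t n = 1.
Proof.
move=> hp hs hx.
have hr : 1 <= sigma' n <= pi n.
  by rewrite hx addn1 /=; exact: ltn_pmod.
have [h1 h2] := clock_inv hp hr t.
rewrite (mcount_agree hs) hx modnDml in h2.
rewrite (addnC (mcount _ _ _) 1) in h2.
move/eqP: h2; rewrite eqn_modDr => /eqP h2.
move: h1; case: (ltngtP (clocks pi sigma' t n) (pi n)) => hc /=.
- rewrite andbT => hc1.
  rewrite (modn_small hc) modn_small in h2 => //.
  exact: leq_ltn_trans hc1 hc.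
- by rewrite andbF.
- rewrite andbT => _; move: h2; rewrite hc modnn.
  by case: (pi n) hp => [|[|k]] // _; rewrite modn_small.
Qed.


Fixpoint box (rng : nat -> seq nat) n : seq (seq nat) :=
  if n is n'.+1 then [seq rcons v x | v <- box rng n', x <- rng n'] else [:: [::]].

Lemma mem_rcons_allpairs (s : seq (seq nat)) (t : seq nat) v x :
  (rcons v x \in [seq rcons v' x' | v' <- s, x' <- t]) = (v \in s) && (x \in t).
Proof.
apply/allpairsP/andP => [[[a b] /= [ha hb /rcons_inj [-> ->]]] //|[hv hx]].
by exists (v, x).
Qed.

Lemma nil_allpairs (s : seq (seq nat)) (t : seq nat) :
  ([::] \in [seq rcons v' x' | v' <- s, x' <- t]) = false.
Proof.
apply/negbTE/allpairsP => [[[a b] /= [_ _]]]; by case: a.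
Qed.

Lemma iotaS0 n : iota 0 n.+1 = iota 0 n ++ [:: n].
Proof. by rewrite -addn1 iotaD. Qed.

Lemma mem_box rng n v : (v \in box rng n) =
  (size v == n) && all (fun r => nth 0 v r \in rng r) (iota 0 n).
Proof.
elim: n v => [|n IH] v; first by case: v.
case/lastP: v => [|v x]; first by rewrite /= nil_allpairs.
rewrite [box _ _]/= mem_rcons_allpairs IH size_rcons eqSS iotaS0 all_cat /= andbT.
case: eqVneq => [hv|] //=.
rewrite nth_rcons hv ltnn eqxx; congr andb.
apply: eq_in_all => r; rewrite mem_iota => /andP[_ hr] /=.
by rewrite nth_rcons hv hr.
Qed.

Lemma box_uniq rng n : (forall r, uniq (rng r)) -> uniq (box rng n).
Proof.
move=> hu; elim: n => [|n IH] //=.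
apply: allpairs_uniq => //; move=> [a b] [c e] _ _ /= /rcons_inj [-> ->] //.
Qed.

Lemma size_box rng n : size (box rng n) = \prod_(0 <= r < n) size (rng r).
Proof.
elim: n => [|n IH]; first by rewrite big_geq.
by rewrite big_nat_recr //= size_allpairs IH.
Qed.

Lemma count_allpairs_rcons (a : pred (seq nat)) (s : seq (seq nat)) (t : seq nat) :
  count a [seq rcons v x | v <- s, x <- t] =
  sumn [seq count (fun x => a (rcons v x)) t | v <- s].
Proof.
elim: s => //= b s IH; by rewrite count_cat count_map IH.
Qed.

Lemma sumn_le_count (T : eqType) (s : seq T) (f : T -> nat) (g : pred T) k :
  (forall v, v \in s -> f v <= k * g v) -> sumn [seq f v | v <- s] <= k * count g s.
Proof.
elim: s => //= a s IH h; rewrite mulnDr; apply: leq_add.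
  by apply: h; rewrite mem_head.
by apply: IH => v hv; apply: h; rewrite in_cons hv orbT.
Qed.

Definition nthf (v : seq nat) := fun r => nth 0 v r.

Definition goodv n t (v : seq nat) :=
  all (fun r => clocks pi (nthf v) t r != 1) (iota 0 n).

Lemma goodv_rcons n t v x : size v = n ->
  goodv n.+1 t (rcons v x) = goodv n t v && (clocks pi (nthf (rcons v x)) t n != 1).
Proof.
move=> hv; rewrite /goodv iotaS0 all_cat /= andbT; congr andb.
apply: eq_in_all => r; rewrite mem_iota => /andP[_ hr] /=.
rewrite (@clocks_agree (nthf (rcons v x)) (nthf v) n) //.
by move=> j hj; rewrite /nthf nth_rcons hv hj.
Qed.

Lemma count_step n t v : 0 < pi n -> size v = n ->
  count (fun x => goodv n.+1 t (rcons v x)) (iota 1 (pi n)) <= (pi n).-1 * goodv n t v.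
Proof.
move=> hp hv.
set x0 := mcount (nthf v) n t %% pi n + 1.
have hx0 : clocks pi (nthf (rcons v x0)) t n = 1.
  apply: (@key_x0 (nthf v)) => //.
    by move=> j hj; rewrite /nthf nth_rcons hv hj.
  by rewrite /nthf nth_rcons hv ltnn eqxx.
apply: (@leq_trans (count (fun x => goodv n t v && (x != x0)) (iota 1 (pi n)))).
  apply: sub_count => x /=; rewrite goodv_rcons // => /andP[-> h].
  by apply/eqP => hx; move: h; rewrite hx hx0.
case: (goodv n t v) => /=.
  rewrite muln1.
  have := count_predC (pred1 x0) (iota 1 (pi n)).
  rewrite count_uniq_mem ?iota_uniq // mem_iota size_iota.
  have -> : 1 <= x0 < 1 + pi n.
    by rewrite /x0 addn1 /= add1n ltnS ltn_pmod.
  move=> h.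
  rewrite (@eq_count _ _ (predC (pred1 x0))) //.
  move: h; set c := count _ _; lia.
by rewrite muln0 count_pred0.
Qed.

Definition rng1 := fun r => iota 1 (pi r).

Lemma count_good n t : (forall r, 0 < pi r) ->
  count (goodv n t) (box rng1 n) <= \prod_(0 <= r < n) (pi r).-1.
Proof.
move=> hp; elim: n => [|n IH].
  by rewrite big_geq //= addn0; case: goodv.
rewrite big_nat_recr //= count_allpairs_rcons mulnC.
apply: leq_trans (leq_mul (leqnn _) IH).
apply: sumn_le_count => v; rewrite mem_box => /andP[/eqP hv _].
exact: count_step.
Qed.

End Comb.

Section Reals.
Variable R : realType.
Variable x : nat -> R.
Hypothesis hx : forall r, 0 <= x r <= 1.

Lemma prod1m_ge0 m n : 0 <= \prod_(m <= r < n) (1 - x r).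
Proof. apply: prodr_ge0 => r _; have := hx r; lra. Qed.

Lemma prod1m_le1 m n : \prod_(m <= r < n) (1 - x r) <= 1.
Proof.
apply: prodr_ile1 => r _; have := hx r; move=> /andP [] *; apply/andP; split; lra.
Qed.

Lemma prod_le_inv n : (1 + \sum_(0 <= r < n) x r) * \prod_(0 <= r < n) (1 - x r) <= 1.
Proof.
elim: n => [|n IH]; first by rewrite !big_geq // mulr1 addr0.
rewrite big_nat_recr //= big_nat_recr //=.
move: IH; set S := \sum_(0 <= i < n) x i; set Q := \prod_(0 <= i < n) (1 - x i).
have h0 : 0 <= Q := prod1m_ge0 0 n; have h1 : Q <= 1 := prod1m_le1 0 n; have := hx n.
have : 0 <= S by apply: sumr_ge0 => r _; have := hx r; lra.
move: (x n) => a hS /andP[a1 a2] hIH.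
have p1 : 0 <= (1 - a) * (1 - (1 + S) * Q) by apply: mulr_ge0; lra.
have p2 : 0 <= a * (1 - a) * (1 - Q) by apply: mulr_ge0; [apply: mulr_ge0|]; lra.
have p3 : 0 <= a * a by apply: mulr_ge0.
nra.
Qed.

Lemma prod_weier m k : 1 - \sum_(m <= r < m + k) x r <= \prod_(m <= r < m + k) (1 - x r).
Proof.
elim: k => [|k IH]; first by rewrite addn0 !big_geq // subr0.
rewrite addnS big_nat_recr ?leq_addr //= big_nat_recr ?leq_addr //=.
move: IH; set S := \sum_(m <= i < m + k) x i; set Q := \prod_(m <= i < m + k) (1 - x i).
have h0 : 0 <= Q := prod1m_ge0 m (m + k); have := hx (m + k)%N.
have : 0 <= S by apply: sumr_ge0 => r _; have := hx r; lra.
move: (x (m + k)%N) => a hS /andP[a1 a2] hIH.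
have p1 : 0 <= a * S by apply: mulr_ge0.
have p2 : 0 <= (1 - a) * (Q - (1 - S)) by apply: mulr_ge0; lra.
nra.
Qed.

Lemma prod_decr m n : (m <= n)%N -> \prod_(0 <= r < n) (1 - x r) <= \prod_(0 <= r < m) (1 - x r).
Proof.
move=> hmn; rewrite (@big_cat_nat _ _ _ m) //=.
have h0 := prod1m_ge0 0 m; have h1 := prod1m_le1 m n; have h2 := prod1m_ge0 m n.
move: h0 h1 h2; set A := \prod_(0 <= r < m) _; set B := \prod_(m <= r < n) _.
move=> h0 h1 h2; have : 0 <= A * (1 - B) by apply: mulr_ge0; lra.
nra.
Qed.

End Reals.

Section Prob.
Variables (d : measure_display) (T : measurableType d) (R : realType)
    (P : probability T R) (pi : nat -> nat) (S : nat -> T -> nat).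
Hypothesis hpi : forall r, (0 < pi r)%N.
Hypothesis hmeas : forall r i, measurable [set w | S r w = i].
Hypothesis hunif : forall r i, (1 <= i <= pi r)%N ->
     P [set w | S r w = i] = ((pi r)%:R^-1 : R)%:E.
Hypothesis hind : indep_seeds P S.

Definition seeds n w := [seq S r w | r <- iota 0 n].

Lemma size_seeds n w : size (seeds n w) = n.
Proof. by rewrite size_map size_iota. Qed.

Lemma nth_seeds n w r : (r < n)%N -> nth 0%N (seeds n w) r = S r w.
Proof. by move=> h; rewrite (nth_map 0%N) ?size_iota // nth_iota. Qed.

Lemma seedsS n w : seeds n.+1 w = rcons (seeds n w) (S n w).
Proof. by rewrite /seeds iotaS0 map_cat cats1. Qed.

Lemma meas_seeds n v : measurable [set w | seeds n w = v].
Proof.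
elim: n v => [|n IH] v.
  case: v => [|a v].
    by rewrite (_ : [set w | seeds 0 w = [::]] = setT) //; apply/seteqP; split.
  by rewrite (_ : [set w | _] = set0) //; apply/seteqP; split.
case/lastP: v => [|v x].
  by rewrite (_ : [set w | _] = set0) //; apply/seteqP; split => w h //.
rewrite (_ : [set w | _] = [set w | seeds n w = v] `&` [set w | S n w = x]).
  exact: measurableI.
apply/seteqP; split => w.
  by rewrite /= seedsS => /rcons_inj [-> ->].
by rewrite /= seedsS; case=> -> ->.
Qed.

Lemma meas_in (A : eqType) (g : T -> A) : (forall a, measurable [set w | g w = a]) ->
  forall s : seq A, measurable [set w | g w \in s].
Proof.
move=> hg; elim=> [|a s IH].
  by rewrite (_ : [set w | _] = set0) //; apply/seteqP; split => w.
rewrite (_ : [set w | _] = [set w | g w = a] `|` [set w | g w \in s]).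
  exact: measurableU.
apply/seteqP; split => w /=; rewrite in_cons.
  by case/orP => [/eqP ->|h]; [left|right].
by case=> [->|->]; rewrite ?eqxx ?orbT.
Qed.

Lemma P_in (A : eqType) (g : T -> A) : (forall a, measurable [set w | g w = a]) ->
  forall s : seq A, uniq s -> P [set w | g w \in s] = (\sum_(a <- s) P [set w | g w = a])%E.
Proof.
move=> hg; elim=> [|a s IH] /=.
  by rewrite big_nil (_ : [set w | _] = set0) ?measure0 //; apply/seteqP; split => w.
case/andP => ha hu.
rewrite big_cons -IH //.
rewrite (_ : [set w | _] = [set w | g w = a] `|` [set w | g w \in s]).
  rewrite measureU //; first exact: meas_in.
  apply/seteqP; split => w //= [h1 h]; by rewrite -h1 h in ha.
apply/seteqP; split => w /=; rewrite in_cons.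
  by case/orP => [/eqP ->|h]; [left|right].
by case=> [->|->]; rewrite ?eqxx ?orbT.
Qed.

Lemma index_iota0 n : index_iota 0 n = iota 0 n.
Proof. by rewrite /index_iota subn0. Qed.

Definition cst n : R := \prod_(0 <= r < n) (pi r)%:R^-1.

Lemma P_cyl n v : size v = n -> (forall r, (r < n)%N -> (1 <= nth 0%N v r <= pi r)%N) ->
  P [set w | seeds n w = v] = (cst n)%:E.
Proof.
move=> hs hr.
rewrite (_ : [set w | seeds n w = v] =
   [set w | forall r, r \in iota 0 n -> S r w = nth 0%N v r]).
  rewrite hind ?iota_uniq // /cst index_iota0 -prodEFin.
  rewrite big_seq [in RHS]big_seq; apply: eq_bigr => r; rewrite mem_iota add0n => /andP[_ h].
  by rewrite hunif // hr.
apply/seteqP; split => w /=.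
  move=> <- r; rewrite mem_iota add0n => /andP[_ h]; by rewrite nth_seeds.
move=> h; apply: (@eq_from_nth _ 0%N); first by rewrite size_seeds hs.
move=> r; rewrite size_seeds => hr'; by rewrite nth_seeds // h // mem_iota add0n hr'.
Qed.

Lemma sum_const_seq (I : Type) (s : seq I) (c : R) : \sum_(i <- s) c = c *+ size s.
Proof.
elim: s => [|a s IH]; first by rewrite big_nil mulr0n.
by rewrite big_cons IH mulrS.
Qed.

Lemma P_box rng n (f : pred (seq nat)) : (forall r, uniq (rng r)) ->
  (forall r x, x \in rng r -> (1 <= x <= pi r)%N) ->
  P [set w | seeds n w \in [seq v <- box rng n | f v]] = (cst n *+ count f (box rng n))%:E.
Proof.
move=> hu hr.
rewrite P_in; [|exact: meas_seeds| by rewrite filter_uniq // box_uniq].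
rewrite big_filter big_seq_cond.
rewrite (eq_bigr (fun _ => (cst n)%:E)); last first.
  move=> v /andP[]; rewrite mem_box => /andP[/eqP hs /allP ha] _.
  rewrite P_cyl // => r hrn; apply: hr; apply: (ha r); by rewrite mem_iota.
by rewrite -big_seq_cond sumEFin -big_filter sum_const_seq size_filter.
Qed.


Definition rng2 := fun r => iota 2 (pi r).-1.

Definition Nt t := [set w | mp_seq pi (fun r => S r w) t = None].
Definition Xn n t := [set w | seeds n w \in [seq v <- box (rng1 pi) n | goodv pi n t v]].
Definition Bad := \bigcup_r [set w | ~ (S r w \in iota 1 (pi r))].

Lemma pi_neq0 r : ((pi r)%:R : R) != 0.
Proof. by rewrite pnatr_eq0 -lt0n hpi. Qed.

Lemma negl_bad : P.-negligible Bad.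
Proof.
apply: negligible_bigcup => r.
exists (~` [set w | S r w \in iota 1 (pi r)]); split.
- apply: measurableC; exact: meas_in.
  have hA : measurable [set w | S r w \in iota 1 (pi r)] by exact: meas_in.
  apply: eq_trans (probability_setC P hA) _.
  rewrite P_in ?iota_uniq //.
  rewrite big_seq (eq_bigr (fun _ => ((pi r)%:R^-1)%:E)); last first.
    by move=> i; rewrite mem_iota add1n ltnS => hi; rewrite hunif.
  rewrite -big_seq sumEFin sum_const_seq size_iota -[_ *+ pi r]mulr_natr mulVf ?pi_neq0 //.
  by rewrite subee.
- by move=> w /= h.
Qed.

Lemma N_sub t : Nt t `<=` Bad `|` \bigcap_n Xn n t.
Proof.
move=> w hw.
case: (pselect (exists r, ~ (S r w \in iota 1 (pi r)))) => [[r hr]|hno].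
  by left; exists r.
right => n _; rewrite /Xn /= mem_filter; apply/andP; split.
- apply/allP => r; rewrite mem_iota add0n => /andP[_ hrn].
  rewrite (@clocks_agree pi _ (fun r => S r w) n) //; last first.
    by move=> j hj; rewrite /nthf nth_seeds.
  apply/eqP; exact: (first1_None hw).
- rewrite mem_box size_seeds eqxx /=; apply/allP => r; rewrite mem_iota add0n => /andP[_ hrn].
  rewrite nth_seeds //; case: (boolP (S r w \in _)) => // h; exfalso.
  by apply: hno; exists r; apply/negP.
Qed.

Lemma fac_eq r : (pi r)%:R^-1 * ((pi r).-1)%:R = 1 - (pi r)%:R^-1 :> R.
Proof.
have hpr := hpi r.
by rewrite -subn1 natrB // mulrBr mulr1 mulVf ?pi_neq0.
Qed.

Lemma P_Xn n t : (P (Xn n t) <= (\prod_(0 <= r < n) (1 - (pi r)%:R^-1))%:E)%E.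
Proof.
rewrite /Xn P_box; last 2 first.
- by move=> r; exact: iota_uniq.
- by move=> r x; rewrite /rng1 mem_iota add1n ltnS.
rewrite lee_fin -mulr_natr /cst.
apply: (@le_trans _ _ (\prod_(0 <= r < n) (pi r)%:R^-1 * (\prod_(0 <= r < n) (pi r).-1)%:R)).
  apply: ler_wpM2l; first by apply: prodr_ge0 => r _; rewrite invr_ge0.
  rewrite ler_nat; exact: count_good.
by rewrite natr_prod -big_split /= (eq_bigr _ (fun r _ => fac_eq r)).
Qed.

Lemma meas_Xn n t : measurable (Xn n t).
Proof. exact: (meas_in (meas_seeds n)). Qed.

Definition small := forall e : R, 0 < e ->
  exists n, \prod_(0 <= r < n) (1 - (pi r)%:R^-1) <= e.

Lemma P_cap t : small -> P (\bigcap_n Xn n t) = 0%E.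
Proof.
move=> hsmall.
apply/eqP; rewrite eq_le measure_ge0 andbT.
apply/lee_addgt0Pr => e he; rewrite add0e.
have [n hn] := hsmall e he.
have h1 : (P (\bigcap_n Xn n t) <= P (Xn n t))%E.
  apply: le_measure; rewrite ?inE.
  - exact: bigcapT_measurable (fun n => meas_Xn n t).
  - exact: meas_Xn.
  - by move=> w /(_ n I).
apply: le_trans h1 _; apply: le_trans (P_Xn n t) _; by rewrite lee_fin.
Qed.

Lemma N_negl t : small -> P.-negligible (Nt t).
Proof.
move=> hs; apply: negligibleS (@N_sub t) _; apply: negligibleU; first exact: negl_bad.
exists (\bigcap_n Xn n t); split => //.
- exact: bigcapT_measurable (fun n => meas_Xn n t).
- exact: P_cap.
Qed.

Lemma ae_of_small : small ->
  {ae P, forall w, forall t, mp_seq pi (fun r => S r w) t != None}.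
Proof.
move=> hs; apply: (@negligibleS _ _ _ _ (\bigcup_t Nt t)); last first.
  exact: negligible_bigcup (fun t => N_negl t hs).
move=> w /= /existsNP [t /negP]; rewrite negbK => /eqP ht; by exists t.
Qed.


Definition xr r : R := (pi r)%:R^-1.

Lemma xr01 r : 0 <= xr r <= 1.
Proof.
rewrite /xr invr_ge0 ler0n /= invf_le1 ?ltr0n ?hpi //.
by rewrite ler1n hpi.
Qed.

Lemma sum_sup : (\sum_(0 <= r <oo) ((pi r)%:R^-1 : R)%:E)%E =
  ereal_sup (range (fun n => (\sum_(0 <= r < n) xr r)%:E)).
Proof.
rewrite (_ : (fun n => (\sum_(0 <= r < n) xr r)%:E) =
             (fun n => \sum_(0 <= r < n) ((pi r)%:R^-1 : R)%:E)%E); last first.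
  by apply/funext => n; rewrite sumEFin.
apply/cvg_lim => //; apply: ereal_nondecreasing_cvgn.
by apply: ereal_nondecreasing_series => n _ _; rewrite lee_fin invr_ge0.
Qed.

Lemma small_of : ((\sum_(0 <= r <oo) ((pi r)%:R^-1 : R)%:E)%E = +oo%E
    \/ exists s, pi s = 1%N) -> small.
Proof.
case=> [hinf | [s hs]] e he.
- have [n hn] : exists n, e^-1 < \sum_(0 <= r < n) xr r.
    case: (pselect (exists n, e^-1 < \sum_(0 <= r < n) xr r)) => // hno; exfalso.
    have : (ereal_sup (range (fun n => (\sum_(0 <= r < n) xr r)%:E)) <= (e^-1)%:E)%E.
      apply: ge_ereal_sup => _ [n _ <-]; rewrite lee_fin leNgt; apply/negP => hn.
      by apply: hno; exists n.
    by rewrite -sum_sup hinf leNgt ltry.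
  exists n.
  have hle := prod_le_inv xr01 n.
  have hQ := prod1m_ge0 xr01 0 n.
  rewrite -/(xr _) in hle hQ *.
  move: hle hQ hn.
  set Q := \prod_(0 <= r < n) _; set Sg := \sum_(0 <= r < n) _ => hle hQ hn.
  have h1 : 1 < Sg * e by rewrite -(ltr_pM2r he) mulVf ?gt_eqF // in hn.
  nra.
- exists s.+1; rewrite big_nat_recr //= hs invr1 subrr mulr0; exact: ltW.
Qed.


Definition Dn n := [set w | seeds n w \in [seq v <- box rng2 n | predT v]].

Lemma Dn_iff n w : Dn n w <-> forall r, (r < n)%N -> S r w \in rng2 r.
Proof.
rewrite /Dn /= mem_filter /= mem_box size_seeds eqxx /=; split.
  move=> /allP h r hr; have := h r; rewrite mem_iota add0n hr nth_seeds //; exact.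
move=> h; apply/allP => r; rewrite mem_iota add0n => /andP[_ hr].
by rewrite nth_seeds // h.
Qed.

Lemma meas_Dn n : measurable (Dn n).
Proof. exact: (meas_in (meas_seeds n)). Qed.

Lemma P_Dn n : P (Dn n) = (\prod_(0 <= r < n) (1 - xr r))%:E.
Proof.
rewrite /Dn P_box; last 2 first.
- by move=> r; exact: iota_uniq.
- move=> r x; rewrite /rng2 mem_iota => /andP[h1 h2]; rewrite (ltnW h1) /=.
  by move: h2 (hpi r); case: (pi r) => [|k] //= h _; rewrite -ltnS; apply: leq_trans h _.
rewrite count_predT size_box -mulr_natr /cst natr_prod -big_split /=.
congr (_%:E); apply: eq_bigr => r _; by rewrite /rng2 size_iota fac_eq.
Qed.

Lemma not_ae :
  (\sum_(0 <= r <oo) ((pi r)%:R^-1 : R)%:E)%E != +oo%E ->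
  (forall s, pi s <> 1%N) ->
  ~ {ae P, forall w, forall t, mp_seq pi (fun r => S r w) t != None}.
Proof.
move=> hsum hp1 [A [mA PA0 hA]].
set L := ereal_sup (range (fun n => (\sum_(0 <= r < n) xr r)%:E)).
have hL0 : (0 <= L)%E.
  apply: le_trans (ereal_sup_ubound _); last by exists 0%N.
  by rewrite big_geq.
have hL : L \is a fin_num by rewrite ge0_fin_numE // ltey /L -sum_sup.
have [_ [N _ <-] hy] := ub_ereal_sup_adherent (e := 1/2) ltac:(lra) hL.
rewrite -/L -(fineK hL) -EFinB lte_fin in hy.
have hub : forall n, \sum_(0 <= r < n) xr r <= fine L.
  move=> n; rewrite -lee_fin fineK //; apply: ereal_sup_ubound; by exists n.
have htail : forall k, \sum_(N <= r < N + k) xr r <= 1/2.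
  move=> k; have := hub (N + k)%N.
  rewrite (@big_cat_nat _ _ _ N) ?leq_addr //=; lra.
have hx1 : forall r, 0 < 1 - xr r.
  move=> r; rewrite subr_gt0 /xr invf_lt1 ?ltr0n ?hpi // ltr1n.
  by have := hpi r; have := hp1 r; lia.
set c := \prod_(0 <= r < N) (1 - xr r) / 2.
have hc0 : 0 < c by rewrite /c divr_gt0 // prodr_gt0.
have hc : forall n, c <= \prod_(0 <= r < n) (1 - xr r).
  move=> n; apply: le_trans (prod_decr xr01 (leq_maxl n N)).
  rewrite -(subnKC (leq_maxr n N)).
  set k := (maxn n N - N)%N.
  rewrite (@big_cat_nat _ _ _ N) ?leq_addr //=.
  have hw := prod_weier xr01 N k; have ht := htail k.
  have hP0 := prod1m_ge0 xr01 0 N.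
  move: hw ht hP0; rewrite /c.
  set P1 := \prod_(0 <= r < N) _; set P2 := \prod_(N <= r < N + k) _.
  set S2 := \sum_(N <= r < N + k) _ => hw ht hP0.
  nra.
have hdec : {homo Dn : n m / (n <= m)%N >-> (m <= n)%O}.
  move=> n m hnm; apply/subsetPset => w /Dn_iff h; apply/Dn_iff => r hr.
  apply: h; exact: leq_trans hr hnm.
have hfin : (P (Dn 0) < +oo)%E.
  by apply: le_lt_trans (probability_le1 P (meas_Dn 0)) _; rewrite ltry.
have hcvg := nonincreasing_cvg_mu hfin meas_Dn (bigcapT_measurable meas_Dn) hdec.
have hge : (c%:E <= P (\bigcap_n Dn n))%E.
  rewrite -(cvg_lim _ hcvg) //; apply: lime_ge; first exact: cvgP hcvg.
  by apply: nearW => n /=; rewrite P_Dn lee_fin.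
have hsub : \bigcap_n Dn n `<=` A.
  move=> w hw; apply: hA => /= hall.
  have : mp_seq pi (fun r => S r w) 0 = None.
    apply: first1_NoneI => r /= he.
    have /Dn_iff h := hw r.+1 I; have := h r (ltnSn r).
    by rewrite /rng2 mem_iota /= he.
  by move=> h0; move: (hall 0%N); rewrite h0.
have : (P (\bigcap_n Dn n) <= 0)%E.
  rewrite -PA0; apply: le_measure; rewrite ?inE //; exact: bigcapT_measurable meas_Dn.
move=> h2; have := le_trans hge h2; rewrite lee_fin leNgt hc0 //.
Qed.


Lemma main_iff :
  ({ae P, forall w, forall t, mp_seq pi (fun r => S r w) t != None} <->
   ((\sum_(0 <= r <oo) ((pi r)%:R^-1 : R)%:E)%E = +oo%E
    \/ exists s, pi s = 1%N)).
Proof using hpi hmeas hunif hind.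
split.
- move=> hae; case: (pselect (exists s, pi s = 1%N)) => [hs|hno]; first by right.
  left; case: (eqVneq (\sum_(0 <= r <oo) ((pi r)%:R^-1 : R)%:E)%E +oo%E) => // hne.
  exfalso; apply: (not_ae hne _ hae) => s hs; apply: hno; by exists s.
- move=> h; apply: ae_of_small; exact: small_of h.
Qed.

End Prob.

Unset Implicit Arguments.

Theorem theorem3 (d : measure_display) (T : measurableType d) (R : realType)
    (P : probability T R) (pi : nat -> nat) (S : nat -> T -> nat) :
  (forall r, (0 < pi r)%N) ->
  (forall r i, measurable [set w | S r w = i]) ->
  (forall r i, (1 <= i <= pi r)%N ->
     P [set w | S r w = i] = ((pi r)%:R^-1 : R)%:E) ->
  indep_seeds P S ->
  ({ae P, forall w, forall t, mp_seq pi (fun r => S r w) t != None} <->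
   ((\sum_(0 <= r <oo) ((pi r)%:R^-1 : R)%:E)%E = +oo%E
    \/ exists s, pi s = 1%N)).
Proof.
move=> hpi hmeas hunif hind; exact: main_iff.
Qed.
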